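(* For every non-singular $\rho\in\mathcal{D}$ at which $f$ is differentiable and every $\alpha>0$, $$\langle\nabla f(\rho),\rho(\alpha)-\rho\rangle\le-\frac{D(\rho(\alpha),\rho)}{\alpha}.$$
   Context: $\mathcal{D}=\{\rho\in\mathbb{C}^{d\times d}:\rho\succeq0,\ \operatorname{tr}\rho=1\}$; $f$ is a convex function on $d\times d$ Hermitian matrices; $\langle A,B\rangle=\operatorname{tr}(A^{\mathrm H}B)$ and $\nabla f(\rho)$ is the Hermitian gradient w.r.t. it. $\rho(\alpha):=\exp[\log\rho-\alpha\nabla f(\rho)]/\operatorname{tr}\exp[\log\rho-\alpha\nabla f(\rho)]$. $D(\sigma,\rho)=\operatorname{tr}(\sigma\log\sigma)-\operatorname{tr}(\sigma\log\rho)-\operatorname{tr}(\sigma-\rho)$ (quantum relative entropy, with $0\log0=0$). *)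

(* Defs.v *)
From HB Require Import structures.
From mathcomp Require Import all_boot all_order all_algebra.
From mathcomp Require Import sesquilinear spectral.
From mathcomp Require Import complex.
From mathcomp Require Import reals.
From mathcomp.analysis Require Import sequences exp.

Set Implicit Arguments.
Unset Strict Implicit.
Unset Printing Implicit Defensive.

Import Order.TTheory GRing.Theory Num.Theory Num.Def.
Local Open Scope ring_scope.
Local Open Scope complex_scope.

Section QDefs.
Variable R : realType.
Local Notation C := (R[i]).

Definition hadj {d} (A : 'M[C]_d) : 'M[C]_d := map_mx conjC (trmx A).

Definition hip {d} (A B : 'M[C]_d) : C := \tr (hadj A *m B).

Definition hermitian {d} (A : 'M[C]_d) : Prop := A \is hermsymmx.

Definition psd {d} (A : 'M[C]_d) : Prop :=
  hermitian A /\ forall v : 'rV[C]_d, 0 <= (v *m A *m map_mx conjC (trmx v)) 0 0.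

Definition density {d} (rho : 'M[C]_d) : Prop := psd rho /\ \tr rho = 1.

Definition nonsingular {d} (rho : 'M[C]_d) : Prop := rho \in unitmx.

Definition fcalc (g : R -> R) {d} (A : 'M[C]_d) : 'M[C]_d :=
  let U := spectralmx A in
  hadj U *m diag_mx (map_mx (fun z : C => (g (complex.Re z))%:C) (spectral_diag A)) *m U.

Definition mexp {d} (A : 'M[C]_d) : 'M[C]_d := fcalc (@expR R) A.
Definition mlog {d} (A : 'M[C]_d) : 'M[C]_d := fcalc (@ln R) A.

Definition xlogx (x : R) : R := if x == 0 then 0 else x * ln x.

Definition relent {d} (sigma rho : 'M[C]_d) : C :=
  \tr (fcalc xlogx sigma) - \tr (sigma *m mlog rho) - \tr (sigma - rho).

Definition rho_step {d} (G rho : 'M[C]_d) (alpha : R) : 'M[C]_d :=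
  let M := mexp (mlog rho - alpha%:C *: G) in (\tr M)^-1 *: M.

Definition fnorm {d} (H : 'M[C]_d) : R := Num.sqrt (complex.Re (hip H H)).

Definition convex_herm {d} (f : 'M[C]_d -> R) : Prop :=
  forall A B : 'M[C]_d, hermitian A -> hermitian B -> forall t : R, 0 <= t <= 1 ->
    f ((1 - t)%:C *: A + t%:C *: B) <= (1 - t) * f A + t * f B.

Definition herm_gradient {d} (f : 'M[C]_d -> R) (rho G : 'M[C]_d) : Prop :=
  hermitian G /\
  forall eps : R, 0 < eps -> exists2 delta : R, 0 < delta &
    forall H : 'M[C]_d, hermitian H -> fnorm H < delta ->
      `| f (rho + H) - f rho - complex.Re (hip G H) | <= eps * fnorm H.

End QDefs.

(* Main.v *)
Require Import Defs.
From HB Require Import structures.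
From mathcomp Require Import all_boot all_order all_algebra.
From mathcomp Require Import sesquilinear spectral.
From mathcomp Require Import complex.
From mathcomp Require Import reals.
From mathcomp.analysis Require Import sequences exp.
Import Order.TTheory GRing.Theory Num.Theory.
Local Open Scope ring_scope.
Local Open Scope complex_scope.
From mathcomp Require Import ring lra.
Import Num.Def.
Set Implicit Arguments.
Unset Strict Implicit.
Unset Printing Implicit Defensive.

Section Gibbs.
Variable R : realType.

Lemma ln_le_sub1 (x : R) : 0 < x -> ln x <= x - 1.
Proof.
move=> x0; have E : 1 + (x - 1) = x by rewrite addrC subrK.
by have := @le_ln1Dx R (x - 1); rewrite E; apply; lra.
Qed.

Lemma gibbs n (r h : 'I_n -> R) (q : 'I_n -> 'I_n -> R) :
  (forall i, 0 < r i) -> \sum_i r i = 1 ->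
  (forall i j, 0 <= q i j) ->
  (forall i, \sum_j q i j = 1) -> (forall j, \sum_i q i j = 1) ->
  \sum_i \sum_j h i * r j * q i j <=
    ln (\sum_i expR (h i)) + \sum_i r i * ln (r i).
Proof.
move=> r0 r1 q0 qr qc.
set z := \sum_i expR (h i).
have z0 : 0 < z.
  have [i0 _] : exists i : 'I_n, true.
    case: n r r0 r1 {h q q0 qr qc z} => [|n] r r0 r1; last by exists ord0.
    by move: r1; rewrite big_ord0 => /eqP; rewrite eq_sym oner_eq0.
  rewrite /z (bigD1 i0) //= ltr_pwDl ?expR_gt0 // sumr_ge0 // => i _.
  exact/ltW/expR_gt0.
have key : forall i j, h i * r j * q i j - r j * ln (r j) * q i j
    - ln z * r j * q i j <= expR (h i) / z * q i j - r j * q i j.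
  move=> i j.
  have x0 : 0 < expR (h i) / (r j * z) by rewrite divr_gt0 ?expR_gt0 ?mulr_gt0.
  have := ln_le_sub1 x0.
  rewrite ln_div ?posrE ?expR_gt0 ?mulr_gt0 // lnM ?posrE // expRK => H.
  have H2 := ler_wpM2l (mulr_ge0 (ltW (r0 j)) (q0 i j)) H.
  have E : r j * q i j * (expR (h i) / (r j * z) - 1) =
            expR (h i) / z * q i j - r j * q i j.
    by field; rewrite ?gt_eqF.
  rewrite E in H2; apply: le_trans H2; rewrite le_eqVlt; apply/orP; left; apply/eqP; ring.
have := ler_sum _ (fun i _ => ler_sum _ (fun j _ => key i j)).
have E1 : \sum_i \sum_j (h i * r j * q i j - r j * ln (r j) * q i j
    - ln z * r j * q i j) = \sum_i \sum_j h i * r j * q i j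
    - \sum_j r j * ln (r j) - ln z.
  rewrite (eq_bigr (fun i => \sum_j h i * r j * q i j - \sum_j r j * ln (r j) * q i j
    - \sum_j ln z * r j * q i j)); last by move=> i _; rewrite !sumrB.
  rewrite !sumrB; congr (_ - _ - _).
    rewrite exchange_big; apply: eq_bigr => j _.
    by rewrite -mulr_sumr qc mulr1.
  rewrite exchange_big /= (eq_bigr (fun j => ln z * r j)).
    by rewrite -mulr_sumr r1 mulr1.
  by move=> j _; rewrite -mulr_sumr qc mulr1.
have E2 : \sum_i \sum_j (expR (h i) / z * q i j - r j * q i j) = 0.
  rewrite (eq_bigr (fun i => expR (h i) / z - \sum_j r j * q i j)); last first.
    by move=> i _; rewrite sumrB -mulr_sumr qr mulr1.
  rewrite sumrB -mulr_suml -/z divff ?gt_eqF // exchange_big /=.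
  rewrite (eq_bigr r) ?r1 ?subrr // => j _.
  by rewrite -mulr_sumr qc mulr1.
move=> /(_ (index_enum _) xpredT (index_enum _) xpredT); rewrite E1 E2; lra.
Qed.
End Gibbs.

Section Mx.
Variable R : realType.
Local Notation C := R[i].

Lemma hadj_mul n (A B : 'M[C]_n) : hadj (A *m B) = hadj B *m hadj A.
Proof. by rewrite /hadj trmx_mul map_mxM. Qed.

Lemma hadjK n (A : 'M[C]_n) : hadj (hadj A) = A.
Proof. by apply/matrixP => i j; rewrite !mxE conjCK. Qed.

Lemma unitary_hadj n (U : 'M[C]_n) : U \is unitarymx -> hadj U \is unitarymx.
Proof. by move=> uU; rewrite /hadj trmxC_unitary. Qed.

Lemma unitaryK n (U : 'M[C]_n) : U \is unitarymx -> U *m hadj U = 1%:M.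
Proof. by move/unitarymxP. Qed.

Lemma unitaryKV n (U : 'M[C]_n) : U \is unitarymx -> hadj U *m U = 1%:M.
Proof.
move=> uU; rewrite /hadj -(invmx_unitary uU) mulVmx //.
exact: unitarymx_unit.
Qed.

Lemma diag_comm_fun n (T : 'M[C]_n) (a b : 'rV[C]_n) (phi : C -> C) :
  diag_mx a *m T = T *m diag_mx b ->
  diag_mx (map_mx phi a) *m T = T *m diag_mx (map_mx phi b).
Proof.
move=> ET; apply/matrixP => i j; move/matrixP: ET => /(_ i j).
rewrite !mul_diag_mx !mul_mx_diag !mxE.
have [->|T0] := eqVneq (T i j) 0; first by rewrite !mulr0 !mul0r.
by rewrite [T i j * _]mulrC => /(mulIf T0) ->; rewrite mulrC.
Qed.

Lemma fc_unique n (P Q : 'M[C]_n) (a b : 'rV[C]_n) (phi : C -> C) :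
  P \is unitarymx -> Q \is unitarymx ->
  hadj P *m diag_mx a *m P = hadj Q *m diag_mx b *m Q ->
  hadj P *m diag_mx (map_mx phi a) *m P = hadj Q *m diag_mx (map_mx phi b) *m Q.
Proof.
move=> uP uQ E.
set T := P *m hadj Q.
have ET : diag_mx a *m T = T *m diag_mx b.
  have := congr1 (fun X => P *m X *m hadj Q) E.
  rewrite /T !mulmxA (unitaryK uP) mul1mx -!mulmxA (unitaryK uQ) mulmx1 => ->.
  by rewrite !mulmxA.
have ET' : diag_mx (map_mx phi a) *m T = T *m diag_mx (map_mx phi b).
  exact: diag_comm_fun.
have -> : hadj P *m diag_mx (map_mx phi a) *m P =
    hadj P *m (diag_mx (map_mx phi a) *m T) *m Q.
  by rewrite /T -!mulmxA (unitaryKV uQ) mulmx1.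
by rewrite ET' /T !mulmxA (unitaryKV uP) mul1mx.
Qed.


Definition dg n (x : 'I_n -> R) : 'M[C]_n := diag_mx (\row_i (x i)%:C).
Definition cj n (P : 'M[C]_n) (x : 'I_n -> R) := hadj P *m dg x *m P.

Lemma normal_cj n (P : 'M[C]_n) x : P \is unitarymx -> cj P x \is normalmx.
Proof.
move=> uP; apply/orthomx_spectral_subproof.
exists (P, \row_i (x i)%:C); first exact: uP.
by rewrite [invmx _](invmx_unitary uP).
Qed.

Lemma fcalc_cj (g : R -> R) n (P : 'M[C]_n) x : P \is unitarymx ->
  fcalc g (cj P x) = cj P (fun i => g (x i)).
Proof.
move=> uP; have /orthomx_spectralP E := normal_cj x uP.
rewrite /fcalc; cbv zeta.
move: E; set S := spectralmx (cj P x); set s := spectral_diag (cj P x) => E.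
have uS : S \is unitarymx by exact: spectral_unitarymx.
rewrite [invmx _](invmx_unitary uS) in E.
rewrite [in RHS]/cj /dg.
have -> : \row_i (g (x i))%:C =
   map_mx (fun z : C => (g (complex.Re z))%:C) (\row_i (x i)%:C).
  by apply/rowP => i; rewrite !mxE.
apply: (fc_unique _ uS uP).
by rewrite -E.
Qed.

Lemma herm_cj n (A : 'M[C]_n) : A \is hermsymmx ->
  A = cj (spectralmx A) (fun i => complex.Re (spectral_diag A 0 i)).
Proof.
move=> hA; have Hr := hermitian_spectral_diag_real hA.
have /orthomx_spectralP E := hermitian_normalmx hA.
rewrite {1}E [invmx _](invmx_unitary (spectral_unitarymx A)) /cj /dg.
congr (_ *m diag_mx _ *m _).
apply/rowP => i; rewrite mxE RRe_real //.
by move/mxOverP: Hr => /(_ 0 i).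
Qed.


Lemma mulCJ (z : C) : z * conjC z = ((complex.Re z)^+2 + (complex.Im z)^+2)%:C.
Proof.
case: z => a b; apply/eqP; rewrite eq_complex /=; apply/andP; split; apply/eqP; ring.
Qed.

Definition qq n (Y : 'M[C]_n) i j := (complex.Re (Y i j))^+2 + (complex.Im (Y i j))^+2.

Lemma qq_ge0 n (Y : 'M[C]_n) i j : 0 <= qq Y i j.
Proof. by rewrite /qq addr_ge0 // sqr_ge0. Qed.

Lemma qq_row n (Y : 'M[C]_n) i : Y \is unitarymx -> \sum_j qq Y i j = 1.
Proof.
move=> uY; have /matrixP /(_ i i) := unitaryK uY.
rewrite !mxE eqxx mulr1n => E; apply: complexI; rewrite rmorph1 -E rmorph_sum.
by apply: eq_bigr => j _; rewrite !mxE mulCJ.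
Qed.

Lemma qq_col n (Y : 'M[C]_n) j : Y \is unitarymx -> \sum_i qq Y i j = 1.
Proof.
move=> uY; have /matrixP /(_ j j) := unitaryKV uY.
rewrite !mxE eqxx mulr1n => E; apply: complexI; rewrite rmorph1 -E rmorph_sum.
by apply: eq_bigr => i _; rewrite !mxE mulrC mulCJ.
Qed.

Lemma tr_cj n (P : 'M[C]_n) x : P \is unitarymx -> \tr (cj P x) = (\sum_i x i)%:C.
Proof.
move=> uP; rewrite /cj mxtrace_mulC mulmxA (unitaryK uP) mul1mx mxtrace_diag.
by rewrite rmorph_sum; apply: eq_bigr => i _; rewrite mxE.
Qed.

Lemma dgM n (x y : 'I_n -> R) : dg x *m dg y = dg (fun i => x i * y i).
Proof.
rewrite /dg mul_diag_mx; apply/matrixP => i j; rewrite !mxE.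
by case: eqP => [->|_]; rewrite ?mulr1n ?mulr0n ?mulr0 // rmorphM.
Qed.

Lemma cjM n (P : 'M[C]_n) x y : P \is unitarymx ->
  cj P x *m cj P y = cj P (fun i => x i * y i).
Proof.
move=> uP; rewrite /cj !mulmxA (mulmxtVK _ uP) -dgM.
by rewrite -[hadj P *m dg x *m dg y]mulmxA.
Qed.

Lemma cjZ n (P : 'M[C]_n) x (c : R) : c%:C *: cj P x = cj P (fun i => c * x i).
Proof.
rewrite /cj scalemxAl scalemxAr; congr (_ *m _ *m _).
by apply/matrixP => i j; rewrite !mxE mulrnAr rmorphM.
Qed.

Lemma cjB n (P : 'M[C]_n) x y : cj P x - cj P y = cj P (fun i => x i - y i).
Proof.
rewrite /cj -mulmxBl -mulmxBr; congr (_ *m _ *m _).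
by apply/matrixP => i j; rewrite !mxE -mulrnBl rmorphB.
Qed.

Lemma hadj_cj n (P : 'M[C]_n) x : hadj (cj P x) = cj P x.
Proof.
rewrite /cj !hadj_mul hadjK mulmxA; congr (_ *m _ *m _).
apply/matrixP => i j; rewrite !mxE.
have [->|ne] := eqVneq i j; first by rewrite !mulr1n; exact: conjc_real.
by rewrite !mulr0n conjC0.
Qed.

Lemma herm_cj' n (P : 'M[C]_n) x : cj P x \is hermsymmx.
Proof.
by apply/is_hermitianmxP; rewrite expr0 scale1r; exact: (esym (hadj_cj P x)).
Qed.


Lemma tr_cjM n (P Q : 'M[C]_n) x y : P \is unitarymx -> Q \is unitarymx ->
  \tr (cj P x *m cj Q y) =
  (\sum_i \sum_j x i * y j * qq (P *m hadj Q) i j)%:C.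
Proof.
move=> uP uQ; rewrite /cj.
have -> : hadj P *m dg x *m P *m (hadj Q *m dg y *m Q) =
    hadj P *m (dg x *m (P *m hadj Q) *m dg y *m hadj (P *m hadj Q)) *m P.
  by rewrite hadj_mul hadjK !mulmxA (mulmxKtV _ uP) // -!mulmxA.
rewrite mxtrace_mulC (mulmxA P) (unitaryK uP) mul1mx.
set Y := P *m hadj Q; clearbody Y.
rewrite /mxtrace rmorph_sum; apply: eq_bigr => i _.
rewrite /dg mul_diag_mx mul_mx_diag mxE rmorph_sum; apply: eq_bigr => j _.
rewrite !mxE !rmorphM /qq -[X in _ = _ * X]mulCJ; ring.
Qed.


Lemma psd_cj_ge0 n (W : 'M[C]_n) r i : W \is unitarymx -> psd (cj W r) -> 0 <= r i.
Proof.
move=> uW [_ /(_ (row i W))].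
have -> : row i W *m cj W r = row i (dg r *m W).
  by rewrite -row_mul /cj !mulmxA (unitaryK uW) mul1mx.
rewrite mul_diag_mx !mxE.
have -> : \sum_j (\row_j0 (\matrix_(i0, j1) ((\row_i1 (r i1)%:C) 0 i0 * W i0 j1)) i j0) 0 j *
   (map_mx conjC (row i W)^T) j 0 = \sum_j (r i)%:C * (qq W i j)%:C.
  by apply: eq_bigr => j _; rewrite !mxE -mulrA mulCJ.
by rewrite -mulr_sumr -rmorph_sum (qq_row _ uW) -rmorphM mulr1 ler0c.
Qed.

Lemma unit_cj_neq0 n (W : 'M[C]_n) r i : cj W r \in unitmx -> r i != 0.
Proof.
rewrite /cj !unitmx_mul => /andP[/andP[_ ud] _].
apply: contraTneq ud => r0.
by rewrite unitmxE det_diag (bigD1 i) //= mxE r0 rmorph0 mul0r unitr0.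
Qed.

End Mx.

Section Main.
Variable R : realType.
Local Notation C := R[i].

Lemma conjCr (c : R) : conjC (c%:C : C) = c%:C.
Proof. exact: conjc_real. Qed.

Lemma hadj_lin n (A B : 'M[C]_n) (c : R) :
  hadj (A - c%:C *: B) = hadj A - c%:C *: hadj B.
Proof.
apply/matrixP => i j; rewrite !mxE rmorphB rmorphM; congr (_ - _ * _).
exact: conjc_real.
Qed.

Lemma herm_hadj n (A : 'M[C]_n) : A \is hermsymmx -> hadj A = A.
Proof. by move/is_hermitianmxP; rewrite expr0 scale1r => {2}->. Qed.

Lemma hadj_herm n (A : 'M[C]_n) : hadj A = A -> A \is hermsymmx.
Proof. by move=> hA; apply/is_hermitianmxP; rewrite expr0 scale1r; exact: (esym hA). Qed.

End Main.

Theorem lemma5 (R : realType) (d : nat) (f : 'M[R[i]]_d -> R)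
  (rho G : 'M[R[i]]_d) (alpha : R) :
  convex_herm f ->
  density rho -> nonsingular rho ->
  herm_gradient f rho G ->
  0 < alpha ->
  hip G (rho_step G rho alpha - rho)
    <= - relent (rho_step G rho alpha) rho / alpha%:C.
Proof.
move=> _ [[hrho psdrho] tr1] nsing [hG _] a0.
have Erho := herm_cj hrho.
have uW : spectralmx rho \is unitarymx by exact: spectral_unitarymx.
move: Erho uW.
set W := spectralmx rho; set r := fun i => complex.Re _.
clearbody W r => Erho uW.
have r0 : forall i, 0 < r i.
  move=> i; rewrite lt0r; apply/andP; split.
    by apply: (unit_cj_neq0 (W:=W)); rewrite -Erho.
  by apply: psd_cj_ge0 uW _; rewrite -Erho.
have r1 : \sum_i r i = 1.
  by apply: complexI; rewrite rmorph1 -(tr_cj r uW) -Erho.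
rewrite Erho in hrho psdrho tr1 nsing * => {hrho psdrho nsing}.
have aC : alpha%:C != 0 :> R[i] by rewrite eq_complex /= negb_and gt_eqF.
have EL : mlog (cj W r) = cj W (fun i => ln (r i)) by rewrite /mlog fcalc_cj.
have GG : hadj G = G := herm_hadj hG.
rewrite /rho_step; cbv zeta.
have hH : (mlog (cj W r) - alpha%:C *: G) \is hermsymmx.
  by apply: hadj_herm; rewrite hadj_lin GG EL hadj_cj.
have EH := herm_cj hH.
have uU := spectral_unitarymx (mlog (cj W r) - alpha%:C *: G).
move: EH uU hH.
set H := mlog (cj W r) - alpha%:C *: G.
have EH' : H = cj W (fun i => ln (r i)) - alpha%:C *: G by rewrite /H EL.
clearbody H.
set U := spectralmx H; set h := fun i => complex.Re _.
clearbody U h => EH uU _.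
have EG : alpha%:C *: G = cj W (fun i => ln (r i)) - cj U h.
  by rewrite -EH EH' opprB addrC subrK.
have EM : mexp H = cj U (fun i => expR (h i)) by rewrite /mexp EH fcalc_cj.
rewrite EM (tr_cj _ uU).
set z := \sum_i expR (h i).
have [i0 _] : exists i : 'I_d, true.
  case: (pickP (@predT 'I_d)) => [i0 _|H0]; first by exists i0.
  by move: r1; rewrite big_pred0 // => /eqP; rewrite eq_sym oner_eq0.
have z0 : 0 < z.
  rewrite /z (bigD1 i0) //= ltr_pwDl ?expR_gt0 // sumr_ge0 // => i _.
  exact/ltW/expR_gt0.
have -> : (z%:C)^-1 = (z^-1)%:C :> R[i] by rewrite fmorphV.
rewrite cjZ; set p := fun i => z^-1 * expR (h i).
have p0 : forall i, 0 < p i by move=> i; rewrite /p mulr_gt0 ?invr_gt0 ?expR_gt0.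
have lnp : forall i, ln (p i) = h i - ln z.
  by move=> i; rewrite /p lnM ?posrE ?invr_gt0 ?expR_gt0 // lnV ?posrE // expRK addrC.
have p1 : \sum_i p i = 1 by rewrite /p -mulr_sumr mulVf ?gt_eqF.
have Ehip : hip G (cj U p - cj W r) =
   (alpha%:C)^-1 * \tr ((cj W (fun i => ln (r i)) - cj U h) *m (cj U p - cj W r)).
  by rewrite /hip GG -EG -scalemxAl mxtraceZ mulKf.
rewrite Ehip /relent EL (fcalc_cj _ _ uU) mulmxBl !mulmxBr !linearB /=.
rewrite !(cjM _ _ uU) !(cjM _ _ uW) !(tr_cj _ uU) !(tr_cj _ uW).
rewrite [\tr (cj U p *m cj W _)]mxtrace_mulC (tr_cjM h r uU uW).
set t := \tr (cj W _ *m cj U p).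
have Ex : \sum_i xlogx (p i) = \sum_i h i * p i - ln z.
  rewrite (eq_bigr (fun i => h i * p i - ln z * p i)); last first.
    by move=> i _; rewrite /xlogx gt_eqF // lnp; ring.
  by rewrite sumrB -mulr_sumr p1 mulr1.
have uY : U *m hadj W \is unitarymx by rewrite mul_unitarymx // unitary_hadj.
have Eg := @gibbs R d r h (qq (U *m hadj W)) r0 r1 (qq_ge0 _)
   (fun i => qq_row i uY) (fun j => qq_col j uY).
have EA : \sum_i ln (r i) * r i = \sum_i r i * ln (r i).
  by apply: eq_bigr => i _; rewrite mulrC.
rewrite Ex p1 r1 EA.
move: Eg; set S := \sum_i \sum_j _; set B := \sum_i h i * p i;
  set A := \sum_i r i * ln (r i) => Eg.
rewrite -subr_ge0.
match goal with |- is_true (0 <= ?X) =>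
  have -> : X = (alpha^-1 * (ln z + A - S))%:C end.
  by field; exact: aC.
rewrite ler0c mulr_ge0 ?invr_ge0 ?(ltW a0) // subr_ge0.
by rewrite -/z in Eg; lra.
Qed.
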